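(* Let $f:\mathbb N\to\mathbb N$ be a function with $f(n)\to\infty$ as $n\to\infty$, and let $\Sigma$ be a finite alphabet with at least two letters. Then there is a right-infinite recurrent word $\mathbf w$ over $\Sigma$ such that $p_{\mathbf w}(n)\le n f(n)$ for all sufficiently large $n$, and such that $\mathbf w$ has infinitely many distinct primitive factors $y$ with the property that $y^n$ is a factor of $\mathbf w$ for every $n\ge 1$.
   Context: A factor of $\mathbf w$ is a finite block of contiguous symbols of $\mathbf w$; $p_{\mathbf w}(n)$ is the number of distinct factors of length $n$. A right-infinite word is recurrent if every factor occurs infinitely often in it. A nonempty word is primitive if it is not of the form $z^m$ with $m\ge 2$. *)

(* Defs.v *)
From mathcomp Require Import all_boot.
From mathcomp Require Import boolp.
Set Implicit Arguments. Unset Strict Implicit. Unset Printing Implicit Defensive.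

Definition block (Sigma : Type) (w : nat -> Sigma) (i n : nat) : seq Sigma :=
  mkseq (fun k => w (i + k)) n.

Definition occurs_at (Sigma : eqType) (w : nat -> Sigma) (u : seq Sigma) (i : nat) : Prop :=
  block w i (size u) = u.

Definition factor (Sigma : eqType) (w : nat -> Sigma) (u : seq Sigma) : Prop :=
  exists i, occurs_at w u i.

Definition complexity (Sigma : finType) (w : nat -> Sigma) (n : nat) : nat :=
  #|[set t : n.-tuple Sigma | `[< factor w (tval t) >] ]|.

Definition recurrent (Sigma : eqType) (w : nat -> Sigma) : Prop :=
  forall u, factor w u -> forall N, exists i, N <= i /\ occurs_at w u i.

Definition wpow (Sigma : Type) (y : seq Sigma) (m : nat) : seq Sigma :=
  flatten (nseq m y).

Definition primitive (Sigma : eqType) (y : seq Sigma) : Prop :=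
  y <> [::] /\ forall (z : seq Sigma) (m : nat), 2 <= m -> y <> wpow z m.

(* Main.v *)
Require Import Defs.
From mathcomp Require Import all_boot zify.
From mathcomp Require Import boolp.
Set Implicit Arguments. Unset Strict Implicit. Unset Printing Implicit Defensive.

Section Constr.
Variable T : finType.
Variables a b : T.
Variable Nf : nat -> nat.

Fixpoint G j := if j is j'.+1 then (G j' + Nf (5 * j + 11)).+1 else (Nf 11).+1.
Definition xl c q : T := if q %% (G c).+1 == G c then b else a.
Definition J k := logn 2 k.+1.
Definition LX k := G k * (G (J k)).+1.
Fixpoint L k := if k is k'.+1 then L k' + LX k' + L k' else 1.
Fixpoint wl k p : T :=
  if k is k'.+1 then
    (if p < L k' then wl k' p
     else if p < L k' + LX k' then xl (J k') (p - L k')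
     else wl k' (p - (L k' + LX k')))
  else b.
Definition w p := wl p p.

Lemma G_Nf j : Nf (5 * j + 11) <= G j.
Proof. case: j => [|j]; first by rewrite /= ltnW. rewrite [G j.+1]/=; lia. Qed.

Lemma G_lt j : G j < G j.+1.
Proof. rewrite [G j.+1]/=; lia. Qed.

Lemma G_mono i j : i <= j -> G i <= G j.
Proof.
elim: j => [|j IH]; first by rewrite leqn0 => /eqP->.
rewrite leq_eqVlt => /orP[/eqP->//|]; rewrite ltnS => /IH H.
by apply: leq_trans H (ltnW (G_lt j)).
Qed.

Lemma G_ge j : j < G j.
Proof. elim: j => [|j IH]; first by []. have := G_lt j; lia. Qed.

Lemma LX_ge k : G k <= LX k.
Proof. rewrite /LX; lia. Qed.

Lemma L_ge k : k < L k.
Proof. elim: k => [|k IH] //=; have := LX_ge k; have := G_ge k; lia. Qed.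

Lemma L_mono i j : i <= j -> L i <= L j.
Proof.
elim: j => [|j IH]; first by rewrite leqn0 => /eqP->.
rewrite leq_eqVlt => /orP[/eqP->//|]; rewrite ltnS => /IH H /=; lia.
Qed.

Lemma wl_stable k m p : k <= m -> p < L k -> wl m p = wl k p.
Proof.
move=> km pk; elim: m km => [|m IH]; first by rewrite leqn0 => /eqP->.
rewrite leq_eqVlt => /orP[/eqP->//|]; rewrite ltnS => km /=.
have := L_mono km => h; have -> : p < L m by lia. exact: IH.
Qed.

Lemma w_wl k p : p < L k -> w p = wl k p.
Proof.
move=> pk; rewrite /w; case: (leqP k p) => kp.
  exact: wl_stable.
by rewrite (wl_stable (ltnW kp)) // L_ge.
Qed.

Lemma wl_suffix Q k p : Q <= k -> p < L Q -> wl k (L k - L Q + p) = wl Q p.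
Proof.
move=> Qk pQ; elim: k Qk => [|k IH]; first by rewrite leqn0 => /eqP->; rewrite subnn.
rewrite leq_eqVlt => /orP[/eqP->|]; first by rewrite subnn.
rewrite ltnS => Qk /=; have := L_mono Qk.
move=> h; have -> : (L k + LX k + L k - L Q + p < L k) = false by lia.
have -> : (L k + LX k + L k - L Q + p < L k + LX k) = false by lia.
have -> : L k + LX k + L k - L Q + p - (L k + LX k) = L k - L Q + p by lia.
exact: IH.
Qed.

Lemma wl_prefix Q k p : Q <= k -> p < L Q -> wl k p = wl Q p.
Proof. exact: wl_stable. Qed.


Lemma xl_small c q : q < G c -> xl c q = a.
Proof.
move=> h; rewrite /xl modn_small; last lia.
by have -> : (q == G c) = false by apply/eqP; lia.
Qed.

Lemma xl_mod c r t : xl c (r + t) = xl c (r %% (G c).+1 + t).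
Proof. by rewrite /xl modnDml. Qed.

Lemma xl_shift c E n x t : n <= E -> x <= n ->
  xl c (E * (G c).+1 - x + t) = xl c (n * (G c).+1 - x + t).
Proof.
move=> nE xn; rewrite /xl.
have -> : E * (G c).+1 - x + t = (E - n) * (G c).+1 + (n * (G c).+1 - x + t).
  have : n * (G c).+1 <= E * (G c).+1 by rewrite leq_mul2r nE orbT.
  rewrite mulnBl; have : x <= n * (G c).+1 by nia. lia.
by rewrite modnMDl.
Qed.

Lemma xl_end c E x t : 0 < E -> x <= (G c).+1 -> t < x ->
  xl c (E * (G c).+1 - x + t) = if t.+1 == x then b else a.
Proof.
move=> E0 xm tx; rewrite /xl.
have -> : E * (G c).+1 - x + t = (E - 1) * (G c).+1 + ((G c).+1 - x + t).
  rewrite mulnBl mul1n; have : (G c).+1 <= E * (G c).+1 by rewrite leq_pmull. lia.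
rewrite modnMDl modn_small; last lia.
by have -> : ((G c).+1 - x + t == G c) = (t.+1 == x) by apply/eqP/eqP; lia.
Qed.

Lemma xl_oneb c n r : n <= G c ->
  exists2 t0, t0 <= n & forall t, t < n -> xl c (r + t) = if t == t0 then b else a.
Proof.
move=> nG; set m := (G c).+1; set s := r %% m.
have sm : s < m by rewrite ltn_mod.
case: (ltnP (G c - s) n) => h.
  exists (G c - s); first lia.
  move=> t tn; rewrite xl_mod -/m -/s /xl -/m.
  case: (ltnP (s + t) m) => st.
    rewrite modn_small //.
    by have -> : (s + t == G c) = (t == G c - s) by apply/eqP/eqP; lia.
  have -> : s + t = m + (s + t - m) by lia.
  rewrite modnDl modn_small; last lia.
  have -> : (s + t - m == G c) = false by apply/eqP; lia.
  by have -> : (t == G c - s) = false by apply/eqP; lia.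
exists n => // t tn; rewrite xl_mod -/m -/s /xl -/m.
have -> : (t == n) = false by apply/eqP; lia.
case: (ltnP (s + t) m) => st.
  rewrite modn_small //.
  by have -> : (s + t == G c) = false by apply/eqP; lia.
have -> : s + t = m + (s + t - m) by lia.
rewrite modnDl modn_small; last lia.
by have -> : (s + t - m == G c) = false by apply/eqP; lia.
Qed.


Lemma mkseq_in (f g : nat -> T) n : (forall t, t < n -> f t = g t) -> mkseq f n = mkseq g n.
Proof. by move=> h; rewrite /mkseq; apply/eq_in_map => t; rewrite mem_iota add0n => /h. Qed.

Definition Fam n Jc : seq (seq T) :=
  [seq mkseq (fun t => wl k.+1 (L k - x + t)) n | k <- iota 0 Jc.+1, x <- iota 0 n]
  ++ [seq mkseq (fun t => wl k.+1 (L k + LX k - x + t)) n | k <- iota 0 Jc.+1, x <- iota 0 n]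
  ++ [seq mkseq (fun t => xl c (r + t)) n | c <- iota 0 Jc, r <- iota 0 n]
  ++ [seq mkseq (fun t => if t == t0 then b else a) n | t0 <- iota 0 n.+1]
  ++ [seq mkseq (fun t => if t < x then wl Jc.+1 (L Jc.+1 - x + t) else xl c (t - x)) n
       | c <- iota 0 Jc.+1, x <- iota 0 n]
  ++ [seq mkseq (fun t => if t < x then xl c (n * (G c).+1 - x + t) else wl Jc.+1 (t - x)) n
       | c <- iota 0 Jc.+1, x <- iota 0 n].

Lemma size_Fam n Jc : 0 < n -> size (Fam n Jc) <= n * (5 * Jc + 6).
Proof. move=> n0; rewrite /Fam !size_cat !size_allpairs !size_map !size_iota; nia. Qed.

Lemma LQ_ge Jc : G Jc <= L Jc.+1.
Proof. rewrite [L _]/=; have := LX_ge Jc; lia. Qed.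

Lemma main n Jc : 2 <= n -> n <= G Jc -> (forall c, c < Jc -> G c < n) ->
  forall k i, i + n <= L k -> mkseq (fun t => wl k (i + t)) n \in Fam n Jc.
Proof.
move=> n2 hJ hJ'; have LQ := LQ_ge Jc.
have inU1 k' x : k' <= Jc -> x < n -> mkseq (fun t => wl k'.+1 (L k' - x + t)) n \in Fam n Jc.
  move=> h1 h2; rewrite /Fam mem_cat; apply/orP; left; apply/allpairsP; exists (k', x).
  by rewrite !mem_iota /=; split => //; lia.
have inU2 k' x : k' <= Jc -> x < n -> mkseq (fun t => wl k'.+1 (L k' + LX k' - x + t)) n \in Fam n Jc.
  move=> h1 h2; rewrite /Fam mem_cat; apply/orP; right; rewrite mem_cat; apply/orP; left.
  apply/allpairsP; exists (k', x).
  by rewrite !mem_iota /=; split => //; lia.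
have inP1 c r : c < Jc -> r < n -> mkseq (fun t => xl c (r + t)) n \in Fam n Jc.
  move=> h1 h2; rewrite /Fam mem_cat; apply/orP; right; rewrite mem_cat; apply/orP; right.
  rewrite mem_cat; apply/orP; left.
  apply/allpairsP; exists (c, r).
  by rewrite !mem_iota /=; split => //; lia.
have inP2 t0 : t0 <= n -> mkseq (fun t => if t == t0 then b else a) n \in Fam n Jc.
  move=> h1; rewrite /Fam mem_cat; apply/orP; right; rewrite mem_cat; apply/orP; right.
  rewrite mem_cat; apply/orP; right; rewrite mem_cat; apply/orP; left.
  apply/mapP; exists t0 => //; rewrite mem_iota; lia.
have inB1 c x : c <= Jc -> x < n -> mkseq (fun t => if t < x then wl Jc.+1 (L Jc.+1 - x + t) else xl c (t - x)) n \in Fam n Jc.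
  move=> h1 h2; rewrite /Fam mem_cat; apply/orP; right; rewrite mem_cat; apply/orP; right.
  rewrite mem_cat; apply/orP; right; rewrite mem_cat; apply/orP; right.
  rewrite mem_cat; apply/orP; left.
  apply/allpairsP; exists (c, x).
  by rewrite !mem_iota /=; split => //; lia.
have inB2 c x : c <= Jc -> x < n -> mkseq (fun t => if t < x then xl c (n * (G c).+1 - x + t) else wl Jc.+1 (t - x)) n \in Fam n Jc.
  move=> h1 h2; rewrite /Fam mem_cat; apply/orP; right; rewrite mem_cat; apply/orP; right.
  rewrite mem_cat; apply/orP; right; rewrite mem_cat; apply/orP; right.
  rewrite mem_cat; apply/orP; right.
  apply/allpairsP; exists (c, x).
  by rewrite !mem_iota /=; split => //; lia.
elim=> [|k IH] i.
  rewrite [L _]/=; lia.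
rewrite [L _]/= => hi.
set c := J k.
have Lk_le : forall p, p < L k -> wl k.+1 p = wl k p.
  by move=> p hp; rewrite [wl _ _]/= hp.
have Lx_le : forall p, L k <= p -> p < L k + LX k -> wl k.+1 p = xl c (p - L k).
  by move=> p h1 h2; rewrite [wl _ _]/= ifF ?h2 //; lia.
have Lw_le : forall p, L k + LX k <= p -> wl k.+1 p = wl k (p - (L k + LX k)).
  by move=> p h1; rewrite [wl _ _]/= ifF ?ifF //; lia.
case: (leqP (i + n) (L k)) => ha.
  rewrite (@mkseq_in _ (fun t => wl k (i + t))); first exact: IH.
  by move=> t tn; apply: Lk_le; lia.
case: (leqP (L k + LX k) i) => hb.
  rewrite (@mkseq_in _ (fun t => wl k (i - (L k + LX k) + t))); first by apply: IH; lia.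
  move=> t tn; rewrite Lw_le; [congr wl; lia | lia].
have LXe : LX k = G k * (G c).+1 by [].
case: (ltnP i (L k)) => hd.
  case: (leqP k Jc) => hk.
    rewrite (@mkseq_in _ (fun t => wl k.+1 (L k - (L k - i) + t))); first by apply: inU1; lia.
    by move=> t _; congr wl; lia.
  have GkJ : G Jc <= G k by apply: G_mono; lia.
  have LQk : L Jc.+1 <= L k by apply: L_mono.
  have := LX_ge k => LXk.
  rewrite (@mkseq_in _ (fun t => if t < L k - i then wl Jc.+1 (L Jc.+1 - (L k - i) + t)
                                   else xl (minn c Jc) (t - (L k - i)))).
    by apply: inB1; [rewrite geq_minr | lia].
  move=> t tn; case: ifP => tx.
    rewrite Lk_le; last lia.
    rewrite -(@wl_suffix Jc.+1 k); [congr wl; lia | lia | lia].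
  rewrite Lx_le; [|lia|lia].
  case: (leqP c Jc) => hc.
    congr xl; lia.
  rewrite !xl_small //; first lia.
  have : G Jc <= G c by apply: G_mono; lia.
  lia.
case: (leqP (i + n) (L k + LX k)) => hc'.
  case: (ltnP c Jc) => hc.
    have := hJ' c hc => Gcn.
    rewrite (@mkseq_in _ (fun t => xl c ((i - L k) %% (G c).+1 + t))).
      apply: inP1 => //; have := ltn_mod (i - L k) (G c).+1; lia.
    by move=> t tn; rewrite Lx_le; [rewrite -xl_mod; congr xl; lia | lia | lia].
  have Gcn : n <= G c by apply: leq_trans hJ (G_mono hc).
  have [t0 t0n H] := xl_oneb (i - L k) Gcn.
  rewrite (@mkseq_in _ (fun t => if t == t0 then b else a)); first exact: inP2.
  by move=> t tn; rewrite Lx_le; [rewrite -H //; congr xl; lia | lia | lia].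
case: (leqP k Jc) => hk.
  rewrite (@mkseq_in _ (fun t => wl k.+1 (L k + LX k - (L k + LX k - i) + t))); first by apply: inU2; lia.
  by move=> t _; congr wl; lia.
have GkJ : G Jc <= G k by apply: G_mono; lia.
have LQk : L Jc.+1 <= L k by apply: L_mono.
have := LX_ge k => LXk.
set x := L k + LX k - i.
rewrite (@mkseq_in _ (fun t => if t < x then xl (minn c Jc) (n * (G (minn c Jc)).+1 - x + t)
                                 else wl Jc.+1 (t - x))).
  by apply: inB2; [rewrite geq_minr | lia].
move=> t tn; case: ifP => tx.
  rewrite Lx_le; [|lia|lia].
  have -> : i + t - L k = G k * (G c).+1 - x + t by rewrite /x LXe; lia.
  case: (leqP c Jc) => hc.
    rewrite (@xl_shift c (G k) n) //; lia.
  have Gcn : n <= G c by apply: leq_trans hJ (G_mono (ltnW hc)).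
  rewrite xl_end; [|lia|lia|lia].
  rewrite xl_end //; lia.
rewrite Lw_le; last lia.
rewrite (@wl_prefix Jc.+1 k); [congr wl; lia | lia | lia].
Qed.

Lemma block_wl k i n : i + n <= L k -> block w i n = mkseq (fun t => wl k (i + t)) n.
Proof. by move=> h; apply: mkseq_in => t tn; apply: w_wl; lia. Qed.

Lemma complexity_bound n Jc : 2 <= n -> n <= G Jc -> (forall c, c < Jc -> G c < n) ->
  complexity w n <= n * (5 * Jc + 6).
Proof.
move=> n2 hJ hJ'; apply: leq_trans (size_Fam Jc (ltnW n2)).
rewrite /complexity cardE -(size_map val); apply: uniq_leq_size.
  by rewrite map_inj_uniq ?enum_uniq //; apply: val_inj.
move=> u /mapP [t]; rewrite mem_enum inE => /asboolP [i hi] ->.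
rewrite /occurs_at size_tuple in hi; change (tval t \in Fam n Jc); rewrite -hi (@block_wl (i + n)).
  by apply: main => //; have := L_ge (i + n); lia.
by have := L_ge (i + n); lia.
Qed.

Lemma rec_w : recurrent w.
Proof.
move=> u [i hi] N; set n := size u; set m := N + i + n.
exists (L m + LX m + i); split; first by have := L_ge m; lia.
rewrite /occurs_at -/n -hi /block; apply: mkseq_in => t tn.
have hm := L_ge m.
rewrite (@w_wl m.+1); last by rewrite [L m.+1]/=; lia.
rewrite (@w_wl m (i + t)); last lia.
rewrite [wl _ _]/= ifF; last lia. rewrite ifF; last lia.
congr wl; lia.
Qed.

Definition yw c := nseq (G c) a ++ [:: b].

Lemma size_wpow (y : seq T) m : size (wpow y m) = m * size y.
Proof. elim: m => [|m IH] //=; rewrite /wpow /= size_cat -/(wpow y m) IH mulSn. done. Qed.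

Lemma nth_wpow c m q : q < m * (G c).+1 -> nth a (wpow (yw c) m) q = xl c q.
Proof.
elim: m q => [|m IH] q //=; rewrite mulSn => hq.
rewrite /wpow /= -/(wpow (yw c) m) nth_cat /yw size_cat size_nseq /= addn1.
case: (ltnP q (G c).+1) => h1.
  rewrite nth_cat size_nseq /xl modn_small //.
  case: (ltnP q (G c)) => h2.
    by rewrite nth_nseq h2; have -> : (q == G c) = false by apply/eqP; lia.
  have -> : q = G c by lia.
  by rewrite subnn eqxx.
rewrite -/(yw c) IH; last lia.
rewrite /xl; have -> : (q - (G c).+1) %% (G c).+1 = q %% (G c).+1.
  by rewrite -{2}(subnK h1) modnDr.
done.
Qed.

Lemma J_inv j m : J (2 ^ j * m.*2.+1).-1 = j.
Proof.
have h : 0 < 2 ^ j * m.*2.+1 by rewrite muln_gt0 expn_gt0.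
rewrite /J prednK // lognM ?expn_gt0 // pfactorK // logn_coprime ?addn0 //.
by rewrite coprime2n /= odd_double.
Qed.

Lemma pow_factor j m : factor w (wpow (yw j) m).
Proof.
set k := (2 ^ j * m.*2.+1).-1.
have Jk : J k = j by apply: J_inv.
have km : m <= k.
  rewrite /k; have : m.*2.+1 <= 2 ^ j * m.*2.+1 by rewrite leq_pmull ?expn_gt0.
  rewrite -addnn; lia.
have Gk : m < G k by have := G_ge k; lia.
exists (L k); rewrite /occurs_at size_wpow /yw size_cat size_nseq addn1 -/(yw j).
rewrite -[in RHS](mkseq_nth a (wpow (yw j) m)) size_wpow /yw size_cat size_nseq addn1 -/(yw j).
apply: mkseq_in => t tn; rewrite nth_wpow //.
have hLX : m * (G j).+1 <= LX k by rewrite /LX Jk leq_mul2r ltnW ?orbT.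
rewrite (@w_wl k.+1); last by rewrite [L k.+1]/=; lia.
rewrite [wl _ _]/= ifF; last lia. rewrite ifT; last lia.
by rewrite Jk; congr xl; lia.
Qed.

Lemma count_wpow (P : pred T) y m : count P (wpow y m) = m * count P y.
Proof. elim: m => [|m IH] //=; rewrite /wpow /= count_cat -/(wpow y m) IH mulSn. done. Qed.

Lemma prim_yw c : a != b -> primitive (yw c).
Proof.
move=> ab; split; first by rewrite /yw; case: (G c).
move=> z m m2 h; have := congr1 (count_mem b) h.
rewrite count_wpow /yw count_cat count_nseq /= eqxx.
move: ab; case: eqP => // _ _.
case: (count_mem b z) => [|k]; lia.
Qed.

End Constr.

Lemma size_le_sumn (T : eqType) (s : seq (seq T)) x : x \in s -> size x <= sumn (map size s).
Proof.
elim: s => [|y s IH] //=; rewrite inE => /orP[/eqP->|/IH]; lia.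
Qed.

Theorem theorem3 (Sigma : finType) (f : nat -> nat) :
  (forall M, exists N, forall n, N <= n -> M <= f n) ->
  2 <= #|Sigma| ->
  exists w : nat -> Sigma,
    [/\ recurrent w,
        (exists N, forall n, N <= n -> complexity w n <= n * f n) &
        (forall s : seq (seq Sigma), exists y : seq Sigma,
            [/\ y \notin s, primitive y, factor w y &
                forall n, 1 <= n -> factor w (wpow y n)])].
Proof.
move=> hf /card_gt1P [a [b [_ _ ab]]].
have [Nf hNf] := choice hf.
exists (w a b Nf); split.
- exact: rec_w.
- exists (G Nf 0).+1 => n hn.
  have exJ : exists j, n <= G Nf j by exists n; apply: ltnW; apply: G_ge.
  case: (ex_minnP exJ) => Jc hJc hmin.
  have hJ' : forall c, c < Jc -> G Nf c < n.
    by move=> c cJ; rewrite ltnNge; apply/negP => /hmin; lia.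
  have J0 : 0 < Jc by case: Jc hJc hJ' {hmin} => // h; lia.
  have hG0 : 1 <= G Nf 0 by [].
  apply: leq_trans (complexity_bound _ _ _ hJc hJ') _; first lia.
  rewrite leq_mul2l; apply/orP; right.
  have h1 : G Nf Jc.-1 < n by apply: hJ'; lia.
  have h2 := G_Nf Nf Jc.-1.
  have := hNf (5 * Jc.-1 + 11) n (leq_trans h2 (ltnW h1)); lia.
- move=> s; set j := sumn (map size s).
  exists (yw a b Nf j); split.
  + apply/negP => /size_le_sumn; rewrite /yw size_cat size_nseq -/j.
    have := G_ge Nf j; lia.
  + exact: prim_yw.
  + by have := pow_factor a b Nf j 1; rewrite /wpow /= cats0.
  + by move=> m _; apply: pow_factor.
Qed.
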